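(* Let $G=([n],E)$ be a graph and let $\pi\in S_n$ be a semi-proper permutation model of $G$. Then $\pi$ is a proper permutation model of $G$ if and only if, for every $i\in[n]$, $$ i + d^+(i) = \pi(i) + d^-(i).$$
   Context: $[n]=\{0,\dots,n-1\}$ and $S_n$ is the set of permutations of $[n]$. For $\pi\in S_n$, a pair $i,j\in[n]$ is a $\pi$-inversion if $(i-j)(\pi(i)-\pi(j))<0$. For a graph $G=([n],E)$, $\pi\in S_n$ is a proper permutation model of $G$ if for all $i,j$: $\{i,j\}\in E$ iff $i,j$ is a $\pi$-inversion; it is a semi-proper permutation model if every edge $\{i,j\}\in E$ is a $\pi$-inversion. $N^+(i)=\{j\in N(i): j>i\}$, $N^-(i)=\{j\in N(i): j<i\}$, $d^+(i)=|N^+(i)|$, $d^-(i)=|N^-(i)|$ (here $N(i)$ is the neighborhood of $i$ in the undirected graph $G$). *)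

(* Defs.v *)
From mathcomp Require Import all_boot all_order all_fingroup.
Set Implicit Arguments. Unset Strict Implicit. Unset Printing Implicit Defensive.

Definition simple_graph (n : nat) (E : rel 'I_n) : Prop :=
  irreflexive E /\ symmetric E.

Definition inversion (n : nat) (pi : 'S_n) (i j : 'I_n) : bool :=
  ((i < j) && (pi j < pi i)) || ((j < i) && (pi i < pi j)).

Definition proper_model (n : nat) (E : rel 'I_n) (pi : 'S_n) : Prop :=
  forall i j : 'I_n, E i j = inversion pi i j.

Definition semi_proper_model (n : nat) (E : rel 'I_n) (pi : 'S_n) : Prop :=
  forall i j : 'I_n, E i j -> inversion pi i j.

Definition dplus (n : nat) (E : rel 'I_n) (i : 'I_n) : nat :=
  #|[set j : 'I_n | E i j && (i < j)]|.
Definition dminus (n : nat) (E : rel 'I_n) (i : 'I_n) : nat :=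
  #|[set j : 'I_n | E i j && (j < i)]|.

(* Main.v *)
Require Import Defs.
From mathcomp Require Import all_boot all_order all_fingroup.
From mathcomp Require Import zify.

Lemma card_lt_ord (n m : nat) : m <= n -> #|[set j : 'I_n | (j : nat) < m]| = m.
Proof.
move=> mn.
have -> : [set j : 'I_n | (j : nat) < m] = widen_ord mn @: [set: 'I_m].
  apply/setP => j; rewrite inE; apply/idP/imsetP.
    move=> jm; exists (Ordinal jm); rewrite ?inE //; exact: val_inj.
  by case=> k _ ->; rewrite /= ltn_ord.
rewrite card_imset ?cardsT ?card_ord //; by move=> a b /(congr1 val) /= /val_inj.
Qed.

Section S.
Variables (n : nat) (pi : 'S_n).
Definition Pset (i : 'I_n) := [set j : 'I_n | ((i : nat) < j) && ((pi j : nat) < pi i)].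
Definition Mset (i : 'I_n) := [set j : 'I_n | ((j : nat) < i) && ((pi i : nat) < pi j)].

Lemma count_inv (i : 'I_n) : (i : nat) + #|Pset i| = (pi i : nat) + #|Mset i|.
Proof.
set A := [set j : 'I_n | ((j : nat) < i) && ((pi j : nat) < pi i)].
have h1 : #|[set j : 'I_n | (j : nat) < i]| = #|A| + #|Mset i|.
  rewrite -cardsUI.
  have -> : A :&: Mset i = set0.
    apply/setP => j; rewrite !inE; apply/negbTE; apply/negP => /andP[/andP[_ a] /andP[_ b]].
    by move: (ltn_trans a b); rewrite ltnn.
  rewrite cards0 addn0; apply: eq_card => j; rewrite !inE.
  case: (ltnP (j : nat) i) => //= ji.
  have : pi j != pi i.
    apply/negP => /eqP /perm_inj ji'; by move: ji; rewrite ji' ltnn.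
  rewrite -val_eqE /= neq_ltn; by case/orP => ->; rewrite ?orbT.
have h2 : #|[set j : 'I_n | (pi j : nat) < pi i]| = #|A| + #|Pset i|.
  rewrite -cardsUI.
  have -> : A :&: Pset i = set0.
    apply/setP => j; rewrite !inE; apply/negbTE; apply/negP => /andP[/andP[a _] /andP[b _]].
    by move: (ltn_trans a b); rewrite ltnn.
  rewrite cards0 addn0; apply: eq_card => j; rewrite !inE.
  case: (ltnP (pi j : nat) (pi i)) => //= ji; rewrite ?andbF ?andbT //.
  have : j != i.
    apply/negP => /eqP ji'; by move: ji; rewrite ji' ltnn.
  rewrite -val_eqE /= neq_ltn; by case/orP => ->; rewrite ?orbT.
have e1 : #|[set j : 'I_n | (j : nat) < i]| = i by apply: card_lt_ord; apply: ltnW.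
have e2 : #|[set j : 'I_n | (pi j : nat) < pi i]| = pi i.
  have -> : [set j : 'I_n | (pi j : nat) < pi i] = pi @^-1: [set k : 'I_n | (k : nat) < pi i].
    by apply/setP => j; rewrite !inE.
  rewrite card_preimset; last exact: perm_inj.
  by apply: card_lt_ord; apply: ltnW.
rewrite -{1}e1 -e2 h1 h2; lia.
Qed.
End S.
Arguments Pset {n}.
Arguments Mset {n}.
Arguments count_inv {n}.

Theorem lemma1 (n : nat) (E : rel 'I_n) (pi : 'S_n) :
  simple_graph E -> semi_proper_model E pi ->
  (proper_model E pi <->
   forall i : 'I_n, (i : nat) + dplus E i = (pi i : nat) + dminus E i).
Proof.
move=> [irrE symE] semi.
have subP : forall i, [set j : 'I_n | E i j && ((i : nat) < j)] \subset Pset pi i.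
  move=> i; apply/subsetP => j; rewrite !inE => /andP[e ij]; rewrite ij /=.
  move: (semi _ _ e); rewrite /inversion ij /=; case/orP=> //.
  by case/andP => ji; move: (ltn_trans ij ji); rewrite ltnn.
have subM : forall i, [set j : 'I_n | E i j && ((j : nat) < i)] \subset Mset pi i.
  move=> i; apply/subsetP => j; rewrite !inE => /andP[e ij]; rewrite ij /=.
  move: (semi _ _ e); rewrite /inversion ij /=; case/orP => // /andP[ji _].
  by move: (ltn_trans ij ji); rewrite ltnn.
split.
  move=> prop i; rewrite /dplus /dminus.
  have -> : [set j : 'I_n | E i j && ((i : nat) < j)] = Pset pi i.
    apply/setP => j; rewrite !inE prop /inversion.
    by case: (ltngtP (i : nat) j) => ij; rewrite /= ?andbT ?andbF ?orbF.
  have -> : [set j : 'I_n | E i j && ((j : nat) < i)] = Mset pi i.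
    apply/setP => j; rewrite !inE prop /inversion.
    by case: (ltngtP (i : nat) j) => ij; rewrite /= ?andbT ?andbF ?orbF.
  exact: count_inv.
move=> hyp.
have claim : forall k (i : 'I_n), (i : nat) < k -> forall j : 'I_n,
    (i : nat) < j -> (pi j : nat) < pi i -> E i j.
  elim=> // k IH i ik.
  have eqM : [set j : 'I_n | E i j && ((j : nat) < i)] = Mset pi i.
    apply/eqP; rewrite eqEsubset subM /=; apply/subsetP => j; rewrite !inE.
    case/andP => ji pij; rewrite ji andbT symE.
    apply: (IH j) => //; exact: leq_trans ji ik.
  have eqP' : [set j : 'I_n | E i j && ((i : nat) < j)] = Pset pi i.
    apply/eqP; rewrite eqEcard subP /=.
    move: (hyp i) (count_inv pi i); rewrite /dminus eqM /dplus => a b.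
    have : #|[set j : 'I_n | E i j && ((i : nat) < j)]| = #|Pset pi i| by lia.
    by move=> ->.
  move=> j ij pij.
  have : j \in Pset pi i by rewrite inE ij pij.
  by rewrite -eqP' inE => /andP[].
move=> i j; apply/idP/idP; first exact: semi.
rewrite /inversion; case/orP => /andP[a b].
  exact: (claim i.+1 i (ltnSn _)).
rewrite symE; exact: (claim j.+1 j (ltnSn _)).
Qed.
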